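(* Let $G$ be an undirected graph with at least one edge. For every integer $k\ge 1$, $$\Big(1-\frac1k\Big)\,\mathsf{OPT}\;\le\;\mathsf{OPT}_k\;\le\;1-\frac1k .$$
   Context: Let $G=(V,E)$ be a finite simple undirected graph with $n=|V|$ nodes and $m=|E|\ge1$ edges, let $d_v$ be the degree of $v$, and let $a_{u,v}=1$ if $\{u,v\}\in E$ and $a_{u,v}=0$ otherwise. For $C\subseteq V$ the modularity of $C$ is $\mathsf M(C)=\frac{1}{2m}\sum_{u\in C}\sum_{v\in C}\big(a_{u,v}-\frac{d_ud_v}{2m}\big)$, the sum ranging over all ordered pairs $(u,v)$ of nodes of $C$, including $u=v$. A clustering is a partition $\mathcal S$ of $V$ into nonempty sets (clusters); its modularity is $\mathsf M(\mathcal S)=\sum_{C\in\mathcal S}\mathsf M(C)$. $\mathsf{OPT}$ is the maximum of $\mathsf M(\mathcal S)$ over all clusterings, and $\mathsf{OPT}_k$ is the maximum of $\mathsf M(\mathcal S)$ over clusterings with at most $k$ clusters. *)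

(* Defs.v *)
From HB Require Import structures.
From mathcomp Require Import all_boot all_order all_algebra.
Set Implicit Arguments. Unset Strict Implicit. Unset Printing Implicit Defensive.
Import Order.TTheory GRing.Theory Num.Theory.
Local Open Scope ring_scope.

Definition simple_graph (T : finType) (e : rel T) : Prop :=
  symmetric e /\ irreflexive e.

Definition deg (T : finType) (e : rel T) (v : T) : nat := #|[set u | e v u]|.

Definition twom (T : finType) (e : rel T) : nat := (\sum_(v : T) deg e v)%N.

Definition adj (R : pzRingType) (T : finType) (e : rel T) (u v : T) : R :=
  (e u v)%:R.

Definition modC (R : fieldType) (T : finType) (e : rel T) (C : {set T}) : R :=
  (twom e)%:R^-1 *
  \sum_(u in C) \sum_(v in C)
     (adj R e u v - ((deg e u)%:R * (deg e v)%:R) / (twom e)%:R).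

Definition modS (R : fieldType) (T : finType) (e : rel T) (S : {set {set T}}) : R :=
  \sum_(C in S) modC R e C.

Definition clustering (T : finType) (S : {set {set T}}) : bool :=
  partition S [set: T].

(* The default value of
   the big max is the modularity of the trivial clustering {V}, which is itself
   a clustering with 1 <= k clusters whenever V is nonempty, so this is the max. *)
Definition OPTk (R : realFieldType) (T : finType) (e : rel T) (k : nat) : R :=
  \big[Num.max/modS R e [set [set: T]]]_(S : {set {set T}} |
      clustering S && (#|S| <= k)%N) modS R e S.

Definition OPT (R : realFieldType) (T : finType) (e : rel T) : R :=
  \big[Num.max/modS R e [set [set: T]]]_(S : {set {set T}} | clustering S)
     modS R e S.

(* Main.v *)
Require Import Defs.
From HB Require Import structures.
From mathcomp Require Import all_boot all_order all_algebra.
Import Order.TTheory GRing.Theory Num.Theory.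
Local Open Scope ring_scope.
Set Implicit Arguments. Unset Strict Implicit.

Lemma part_sum (V : nmodType) (T : finType) (P : {set {set T}})
  (hP : partition P [set: T]) (F : T -> T -> V) :
  \sum_(C in P) \sum_(u in C) \sum_(v in C) F u v =
  \sum_u \sum_v (if pblock P u == pblock P v then F u v else 0).
Proof.
case/and3P: hP => /eqP hc ht _.
have -> : \sum_u \sum_v (if pblock P u == pblock P v then F u v else 0)
   = \sum_(u in cover P) \sum_(v in pblock P u) F u v.
  rewrite hc; apply: eq_big => [u|u _]; first by rewrite inE.
   rewrite [RHS]big_mkcond; apply: eq_bigr => v _.
  by rewrite eq_pblock ?hc ?inE.
rewrite big_trivIset //; apply: eq_bigr => C PC; apply: eq_bigr => u uC.
by rewrite (def_pblock ht PC uC).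
Qed.


Lemma prod2 {I : finType} {X Y : I} (hXY : X != Y) (F : I -> nat) :
  (\prod_i F i = F X * F Y * \prod_(i | (i != X) && (i != Y)) F i)%N.
Proof.
rewrite (bigD1 X) //= (bigD1 Y) /=; last by rewrite eq_sym.
by rewrite mulnA; congr (_ * _)%N; apply: eq_bigl => i; rewrite andbC.
Qed.

Lemma count_ffun (I J : finType) (X Y : I) (hXY : X != Y) :
  ((\sum_(f : {ffun I -> J}) nat_of_bool (f X == f Y)) * #|J| = #|{ffun I -> J}|)%N.
Proof.
have hYX : (Y == X) = false by rewrite eq_sym (negbTE hXY).
have H1 : forall a : J, (\sum_(j : J) nat_of_bool (j == a) = 1)%N.
  by move=> a; rewrite (bigD1 a) //= eqxx big1 // => j /negbTE ->.
pose G (a : J) (i : I) (j : J) : nat :=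
  if i == X then nat_of_bool (j == a) else if i == Y then nat_of_bool (j == a) else 1%N.
have E1 : forall f : {ffun I -> J}, nat_of_bool (f X == f Y) =
   (\sum_a \prod_i G a i (f i))%N.
  move=> f; rewrite (bigD1 (f X)) //= [X in (_ + X)%N]big1; last first.
    move=> a Ha; rewrite eq_sym in Ha; rewrite (prod2 hXY) /G eqxx (negbTE Ha) //.
  rewrite (prod2 hXY) /G eqxx hYX eqxx [X in (_ * X)%N]big1; last first.
    by move=> i /andP[/negbTE -> /negbTE ->].
  by rewrite addn0 muln1 eqxx /= mul1n eq_sym.
rewrite (eq_bigr _ (fun f _ => E1 f)) exchange_big /=.
have E2 : forall a, (\sum_(f : {ffun I -> J}) \prod_i G a i (f i) =
   \prod_(i | (i != X) && (i != Y)) #|J|)%N.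
  move=> a; rewrite -(bigA_distr_bigA (G a)) (prod2 hXY) /G eqxx hYX eqxx.
  rewrite H1 !mul1n (eq_bigr (fun _ => #|J|)) // => i /andP[/negbTE -> /negbTE ->].
  by rewrite sum1_card.
rewrite (eq_bigr _ (fun a _ => E2 a)) sum_nat_const.
rewrite card_ffun -prod_nat_const (prod2 hXY).
by rewrite mulnAC.
Qed.


Definition Bm (R : fieldType) (T : finType) (e : rel T) (u v : T) : R :=
  adj R e u v - ((deg e u)%:R * (deg e v)%:R) / (twom e)%:R.

Lemma modS_part (R : fieldType) (T : finType) (e : rel T) (P : {set {set T}})
  (hP : partition P [set: T]) :
  modS R e P = (twom e)%:R^-1 *
    \sum_u \sum_v (if pblock P u == pblock P v then Bm R e u v else 0).
Proof. by rewrite /modS /modC -mulr_sumr (part_sum hP). Qed.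

Lemma deg_sum (T : finType) (e : rel T) u : deg e u = (\sum_v nat_of_bool (e u v))%N.
Proof.
rewrite /deg -sum1_card big_mkcond /=; apply: eq_bigr => v _.
by rewrite inE; case: (e u v).
Qed.

Lemma sum_adj (R : fieldType) (T : finType) (e : rel T) :
  \sum_u \sum_v adj R e u v = (twom e)%:R.
Proof.
rewrite /twom natr_sum; apply: eq_bigr => u _.
by rewrite deg_sum natr_sum.
Qed.

Lemma sumB0 (R : numFieldType) (T : finType) (e : rel T) (hw : twom e != 0%N) :
  \sum_u \sum_v Bm R e u v = 0.
Proof.
have hw' : (twom e)%:R != 0 :> R by rewrite pnatr_eq0.
under eq_bigr => u _ do rewrite sumrB.
rewrite sumrB sum_adj.
have -> : \sum_u \sum_v ((deg e u)%:R * (deg e v)%:R / (twom e)%:R : R)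
   = (\sum_u (deg e u)%:R) * (\sum_v (deg e v)%:R) / (twom e)%:R.
  rewrite mulr_suml mulr_suml; apply: eq_bigr => u _.
  rewrite mulr_sumr mulr_suml; apply: eq_bigr => v _; by [].
by rewrite -natr_sum -/(twom e) mulfK // subrr.
Qed.

Lemma fiber_le (R : realFieldType) (T : finType) (e : rel T) (k : nat) (g : T -> 'I_k) :
  (twom e)%:R^-1 *
    \sum_u \sum_v (if g u == g v then Bm R e u v else 0) <= OPTk R e k.
Proof.
pose P := preim_partition g [set: T].
have hP : partition P [set: T] by apply: preim_partitionP.
have hcard : (#|P| <= k)%N.
  pose f (a : 'I_k) := [set y in [set: T] | a == g y].
  apply: (@leq_trans #|f @: [set: 'I_k]|); last first.
    by apply: leq_trans (leq_imset_card _ _) _; rewrite cardsT card_ord.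
  apply: subset_leq_card; apply/subsetP => C /imsetP [x _ ->].
  by apply/imsetP; exists (g x).
have heq : forall u v, (pblock P u == pblock P v) = (g u == g v).
  move=> u v; case/and3P: hP => /eqP hc ht _.
  rewrite eq_pblock // ?hc ?inE //.
  rewrite (@pblock_equivalence_partition _ (fun x y => g x == g y)) ?inE //.
  by split=> // /eqP->.
have := @le_bigmax_cond _ R _ (modS R e [set [set: T]]) P
   (fun S : {set {set T}} => clustering S && (#|S| <= k)%N) (modS R e).
rewrite /OPTk /clustering hP hcard => /(_ isT).
rewrite (modS_part R e hP).
by under eq_bigr => u _ do under eq_bigr => v _ do rewrite heq.
Qed.

Lemma avg_le (R : realFieldType) (T : finType) (e : rel T) (k : nat) (hk : (1 <= k)%N)
  (hw : twom e != 0%N) (S : {set {set T}}) (hS : clustering S) :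
  (1 - k%:R^-1) * modS R e S <= OPTk R e k.
Proof.
set w : R := (twom e)%:R.
set N := #|{ffun {set T} -> 'I_k}|.
set K : R := N%:R.
have hK : 0 < K by rewrite ltr0n /N card_ffun card_ord expn_gt0 hk.
have hk' : k%:R != 0 :> R by rewrite pnatr_eq0 -lt0n.
pose Q (f : {ffun {set T} -> 'I_k}) := w^-1 *
  \sum_u \sum_v (if f (pblock S u) == f (pblock S v) then Bm R e u v else 0).
have step1 : \sum_f Q f <= K * OPTk R e k.
  have := @ler_sum _ _ (index_enum _) predT _ _ (fun (f : {ffun {set T} -> 'I_k}) _ => fiber_le R e (fun u : T => f (pblock S u))).
  rewrite sumr_const /K mulr_natl. exact.
pose c u v := (\sum_(f : {ffun {set T} -> 'I_k}) nat_of_bool (f (pblock S u) == f (pblock S v)))%N.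
have step2 : \sum_f Q f = w^-1 * \sum_u \sum_v (Bm R e u v * (c u v)%:R).
  rewrite /Q -mulr_sumr; congr (_ * _).
  rewrite exchange_big; apply: eq_bigr => u _; rewrite exchange_big; apply: eq_bigr => v _.
  rewrite /c natr_sum mulr_sumr; apply: eq_bigr => f _.
  by case: ifP; rewrite ?mulr1 ?mulr0.
have step3 : forall u v, Bm R e u v * (c u v)%:R = Bm R e u v * (K / k%:R) +
    (if pblock S u == pblock S v then Bm R e u v * (K - K / k%:R) else 0).
  move=> u v; case: ifP => [/eqP huv | /negbT huv].
    have -> : c u v = N.
      rewrite /c huv (eq_bigr (fun _ => 1%N)) => [|f _]; last by rewrite eqxx.
      by rewrite sum1_card.
    by rewrite -mulrDr addrC subrK.
  have hc : (c u v * k = N)%N.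
    by have := count_ffun 'I_k huv; rewrite card_ord.
  have -> : (c u v)%:R = K / k%:R :> R.
    by rewrite /K -hc natrM mulfK.
  by rewrite addr0.
have step4 : \sum_u \sum_v (Bm R e u v * (c u v)%:R) =
    (\sum_u \sum_v (if pblock S u == pblock S v then Bm R e u v else 0)) * (K - K / k%:R).
  under eq_bigr => u _ do under eq_bigr => v _ do rewrite step3.
  under eq_bigr => u _ do rewrite big_split /=.
  rewrite big_split /=.
  have -> : \sum_u \sum_v Bm R e u v * (K / k%:R) = 0.
    have -> : \sum_u \sum_v Bm R e u v * (K / k%:R) = (\sum_u \sum_v Bm R e u v) * (K / k%:R).
      by rewrite mulr_suml; apply: eq_bigr => u _; rewrite mulr_suml.
    by rewrite (sumB0 R hw) mul0r.
  rewrite add0r mulr_suml; apply: eq_bigr => u _; rewrite mulr_suml; apply: eq_bigr => v _.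
  by case: ifP; rewrite ?mul0r.
have hSp : partition S [set: T] by [].
move: step1; rewrite step2 step4 (modS_part R e hSp).
set X := \sum_u \sum_v _.
have -> : w^-1 * (X * (K - K / k%:R)) = K * ((1 - k%:R^-1) * (w^-1 * X)).
  have -> : K - K / k%:R = K * (1 - k%:R^-1) by rewrite mulrBr mulr1.
  move: (w^-1) (1 - k%:R^-1) => y z.
  by rewrite [RHS]mulrC -!mulrA [RHS]mulrCA; congr (_ * _); rewrite mulrCA [LHS]mulrC -mulrA [RHS]mulrCA.
by rewrite (ler_pM2l hK).
Qed.

Lemma cs_ineq (R : realFieldType) (I : finType) (A : {set I}) (x : I -> R)
  (hA : (0 < #|A|)%N) (hs : \sum_(i in A) x i = 1) :
  (#|A|%:R)^-1 <= \sum_(i in A) x i ^+ 2.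
Proof.
set c : R := (#|A|%:R)^-1.
have hn : (#|A|%:R : R) != 0 by rewrite pnatr_eq0 -lt0n.
have h0 : 0 <= \sum_(i in A) (x i - c) ^+ 2 by apply: sumr_ge0 => i _; apply: sqr_ge0.
rewrite (eq_bigr _ (fun i _ => sqrrB (x i) c)) in h0.
rewrite big_split /= sumrB sumr_const in h0.
have E : \sum_(i in A) x i * c *+ 2 = c *+ 2 by rewrite sumrMnl -mulr_suml hs mul1r.
have E2 : c ^+ 2 *+ #|A| = c.
  by rewrite -mulr_natr expr2 -mulrA mulVf // mulr1.
rewrite E E2 mulr2n opprD addrA subrK in h0.
by rewrite -subr_ge0.
Qed.

Lemma upper (R : realFieldType) (T : finType) (e : rel T) (k : nat) (hk : (1 <= k)%N)
  (hw : twom e != 0%N) (u0 : T) (S : {set {set T}}) (hS : clustering S)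
  (hSk : (#|S| <= k)%N) : modS R e S <= 1 - k%:R^-1.
Proof.
have hSp : partition S [set: T] by [].
case/and3P: (hSp) => /eqP hc ht _.
set w : R := (twom e)%:R.
have hw0 : 0 < w by rewrite ltr0n lt0n.
pose d u : R := (deg e u)%:R.
pose x (C : {set T}) := (\sum_(u in C) d u) / w.
have hmod : modS R e S = w^-1 * \sum_(C in S) \sum_(u in C) \sum_(v in C) adj R e u v
     - \sum_(C in S) x C ^+ 2.
  rewrite /modS mulr_sumr -sumrB; apply: eq_bigr => C _.
  rewrite /modC -/w (eq_bigr _ (fun u _ => sumrB _ _ _ _)) sumrB mulrBr; congr (_ - _).
  rewrite /x expr2.
  have -> : \sum_(u in C) \sum_(v in C) ((deg e u)%:R * (deg e v)%:R / w) =
      (\sum_(u in C) d u) * ((\sum_(v in C) d v) / w).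
    rewrite mulr_suml; apply: eq_bigr => u _.
    by rewrite mulr_suml mulr_sumr; apply: eq_bigr => v _; rewrite mulrA.
  by rewrite mulrCA -mulrA.
have hA : w^-1 * \sum_(C in S) \sum_(u in C) \sum_(v in C) adj R e u v <= 1.
  rewrite (part_sum hSp) ler_pdivrMl // mulr1 -[X in _ <= X](sum_adj R e).
  apply: ler_sum => u _; apply: ler_sum => v _.
  by case: ifP => _ //; rewrite /adj ler0n.
have hx : \sum_(C in S) x C = 1.
  rewrite -mulr_suml -big_trivIset // hc.
  have -> : \sum_(u in [set: T]) d u = w.
    rewrite /w /twom natr_sum; apply: eq_bigl => u; by rewrite inE.
  by rewrite mulfV // gt_eqF.
have hS0 : (0 < #|S|)%N.
  apply/card_gt0P; exists (pblock S u0); apply: pblock_mem; by rewrite hc inE.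
have := cs_ineq hS0 hx.
have hkS : k%:R^-1 <= (#|S|%:R : R)^-1.
  rewrite lef_pV2 ?ler_nat // posrE ltr0n //; exact: leq_trans hS0 hSk.
move=> hcs; rewrite hmod; apply: lerB => //; exact: le_trans hkS hcs.
Qed.

Theorem lemma1 (R : realFieldType) (T : finType) (e : rel T)
  (hG : simple_graph e) (hE : exists u v, e u v) (k : nat) (hk : (1 <= k)%N) :
  (1 - k%:R^-1) * OPT R e <= OPTk R e k /\ OPTk R e k <= 1 - k%:R^-1.
Proof.
case: hE => u0 [v0 huv].
have hw : twom e != 0%N.
  rewrite -lt0n /twom (bigD1 u0) //= -[(0 < _)%N]orbF; apply/orP; left.
  by rewrite -addn1 addn_gt0; apply/orP; left; apply/card_gt0P; exists v0; rewrite inE.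
have h1 : clustering [set [set: T]].
  rewrite /clustering /partition cover1 eqxx trivIset1 /= inE.
  by apply/eqP => /setP /(_ u0); rewrite !inE.
have hc1 : (#|[set [set: T]]| <= k)%N by rewrite cards1.
have hup : OPTk R e k <= 1 - k%:R^-1.
  apply: bigmax_le; first exact: upper hk hw u0 _ h1 hc1.
  by move=> S /andP[hS hSk]; exact: upper hk hw u0 _ hS hSk.
split => //.
rewrite /OPT; apply: (big_ind (fun y => (1 - k%:R^-1) * y <= OPTk R e k)).
- exact: avg_le hk hw _ h1.
- by move=> x y hx hy; rewrite /Order.max; case: ifP.
- by move=> S hS; exact: avg_le hk hw _ hS.
Qed.
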